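(* Let $p$ be a prime number and let $x,y,z\in\mathbb{N}$ (positive integers) with $x\le y\le z$ satisfy $$\frac{4}{p}=\frac{1}{x}+\frac{1}{y}+\frac{1}{z}.$$ Then $$4xy-(x+y)p=\gcd(y,p)\,\gcd(xy,\,x+y).$$
   Context: $\mathbb{N}$ denotes the positive integers. *)

(* Defs.v *)
From mathcomp Require Import all_boot all_order all_algebra.

(* Main.v *)
Require Import Defs.
From mathcomp Require Import all_boot all_order all_algebra.
From mathcomp Require Import zify ring.

Lemma keyE (p x y z : nat) :
  4 * x * y * z = p * (y * z + x * z + x * y) ->
  (x + y) * p * z + p * (x * y) = 4 * (x * y) * z.
Proof. by move=> E; rewrite !mulnA E; ring. Qed.
Arguments keyE {p x y z}.

Lemma hleL (p x y z : nat) : 0 < z ->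
  4 * x * y * z = p * (y * z + x * z + x * y) ->
  (x + y) * p <= 4 * (x * y).
Proof.
move=> z0 E; have h1 : (x + y) * p * z <= 4 * (x * y) * z.
  by rewrite -(keyE E) leq_addr.
by rewrite leq_pmul2r in h1.
Qed.
Arguments hleL {p x y z}.


Lemma mainN (p x y z : nat) :
  prime p -> 0 < x -> x <= y -> y <= z ->
  4 * x * y * z = p * (y * z + x * z + x * y) ->
  4 * (x * y) - (x + y) * p = gcdn y p * gcdn (x * y) (x + y).
Proof.
move=> pp x0 xy yz E.
have p2 : 1 < p by apply: prime_gt1.
have y0 : 0 < y by lia.
have z0 : 0 < z by lia.
have hxp : x < p.
  rewrite ltnNge; apply/negP => px.
  set S := y * z + x * z + x * y.
  have h1 : p * S <= x * S by apply: leq_mul.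
  have h2 : x * (x * z) <= x * (y * z) by rewrite leq_mul2l leq_mul2r xy !orbT.
  have h3 : x * (x * y) <= x * (y * z) by rewrite leq_mul2l (leq_mul xy yz) orbT.
  have h4 : 0 < x * (y * z) by rewrite !muln_gt0 x0 y0 z0.
  have e1 : x * S = x * (y * z) + x * (x * z) + x * (x * y) by rewrite /S !mulnDr.
  have e2 : 4 * x * y * z = 4 * (x * (y * z)) by rewrite !mulnA.
  move: E h1 h2 h3 h4; rewrite e2 e1.
  set a := x * (y * z); set b := x * (x * z); set c := x * (x * y); set q := p * S.
  lia.
set D := 4 * (x * y) - (x + y) * p.
have hD : D * z = p * (x * y).
  by rewrite /D mulnBl -(keyE E) addKn.
have D0 : 0 < D.
  have : 0 < D * z by rewrite hD !muln_gt0 x0 y0 (ltnW p2).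
  by rewrite muln_gt0 => /andP[].
have hle : (x + y) * p <= 4 * (x * y) by apply: hleL z0 E.
have hpx : ~~ (p %| x).
  by apply/negP => /(dvdn_leq x0); lia.
set h := gcdn (x * y) (x + y).
have h0 : 0 < h.
  rewrite /h gcdn_gt0; apply/orP; right; lia.
have hDsub : (x + y) * p = 4 * (x * y) - D by rewrite /D subKn.
have Ddvd : D %| p * (x * y) by apply/dvdnP; exists z; rewrite -hD mulnC.
have hdD : h %| D.
  apply: dvdn_sub; first by apply: dvdn_mull; apply: dvdn_gcdl.
  by apply: dvdn_mulr; apply: dvdn_gcdr.
set e := gcdn D (x * y).
have eDp : D %| p * e.
  rewrite /e muln_gcdr dvdn_gcd Ddvd andbT; exact: dvdn_mull.
have e1 : e %| x * y by apply: dvdn_gcdr.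
have e2 : e %| (x + y) * p.
  rewrite hDsub; apply: dvdn_sub; first by apply: dvdn_mull.
  exact: dvdn_gcdl.
have [py|npy] := boolP (p %| y).
- have gp : gcdn y p = p by apply/gcdn_idPr.
  rewrite gp.
  have Tdiv : p * h %| D.
    rewrite Gauss_dvd; last first.
      rewrite prime_coprime //; apply/negP => /(dvdn_trans)/(_ (dvdn_gcdr _ _)).
      by rewrite dvdn_addl // (negbTE hpx).
    rewrite hdD andbT /D; apply: dvdn_sub; first by apply: dvdn_mull; apply: dvdn_mull.
    exact: dvdn_mull.
  have eT : e %| p * h.
    rewrite /h muln_gcdr gcdnC dvdn_gcd; apply/andP; split; [rewrite mulnC; exact: e2 | exact: dvdn_mull].
  have DpT : D %| p * (p * h) by apply: dvdn_trans eDp _; rewrite dvdn_pmul2l ?prime_gt0.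
  move/dvdnP: Tdiv => [k Hk].
  have kp : k %| p.
    by move: DpT; rewrite Hk dvdn_pmul2r // muln_gt0 h0 prime_gt0.
  have /orP[k1|kp'] := (primeP pp).2 k kp.
    by rewrite Hk (eqP k1) mul1n.
  exfalso; rewrite (eqP kp') in Hk.
  move: hD; rewrite Hk => hD.
  have hy : p * h * z = x * y.
    by apply/eqP; rewrite -(eqn_pmul2l (prime_gt0 pp)) -hD !mulnA.
  have : p * y <= p * h * z by rewrite -mulnA leq_mul2l (leq_trans yz (leq_pmull _ h0)) orbT.
  have : x * y < p * y by rewrite ltn_pmul2r.
  rewrite hy; lia.
- have gp : gcdn y p = 1 by apply/eqP; rewrite gcdnC -/(coprime p y) prime_coprime.
  rewrite gp mul1n.
  have ecop : coprime e p.
    rewrite coprime_sym prime_coprime //; apply/negP => /dvdn_trans/(_ e1).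
    by rewrite Euclid_dvdM // (negbTE hpx) (negbTE npy).
  have eT : e %| h by rewrite dvdn_gcd e1 -(Gauss_dvdl _ ecop).
  have DpT : D %| p * h by apply: dvdn_trans eDp _; rewrite dvdn_pmul2l ?prime_gt0.
  move/dvdnP: hdD => [k Hk].
  have kp : k %| p by move: DpT; rewrite Hk dvdn_pmul2r.
  have /orP[k1|kp'] := (primeP pp).2 k kp.
    by rewrite Hk (eqP k1) mul1n.
  exfalso; rewrite (eqP kp') in Hk.
  have Dxy : D %| 4 * (x * y).
    have : D %| (x + y) * p by rewrite Hk [p * h]mulnC dvdn_pmul2r ?prime_gt0 // dvdn_gcdr.
    by move=> H; rewrite -(subnK hle) (dvdn_addl _ H).
  have p4 : p %| 4 by move: Dxy; rewrite Hk => /(dvdn_trans (dvdn_mulr _ (dvdnn p)));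
    rewrite !Euclid_dvdM // (negbTE hpx) (negbTE npy) !orbF.
  have p2e : p = 2.
    have : p %| 2 * 2 by [].
    rewrite Euclid_dvdM // orbb => /dvdn_leq; lia.
  subst p.
  have x1 : x = 1 by lia.
  subst x.
  have yn2 : y != 2 by apply/eqP => y2; rewrite y2 in npy.
  have [y1|y3] : y <= 1 \/ 3 <= y by move/eqP: yn2; lia.
    have : y = 1 by lia.
    move=> ?; subst y; lia.
  have : 3 * z <= y * z by apply: leq_mul.
  move: E; rewrite !mul1n muln1 -!mulnA. set w := y * z. move=> E3 H3; clearbody w; clear -E3 H3 z0 y3 yz; lia.
Qed.

Import GRing.Theory Num.Theory.
From mathcomp Require Import lra.
Local Open Scope ring_scope.
Lemma natEq (p x y z : nat) :
  prime p -> (0 < x)%N -> (x <= y)%N -> (y <= z)%N ->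
  (4%:R / p%:R : rat) = 1 / x%:R + 1 / y%:R + 1 / z%:R ->
  (4 * x * y * z = p * (y * z + x * z + x * y))%N.
Proof.
move=> pp x0 xy yz H.
have p0 : (0 < p)%N by apply: prime_gt0.
have y0 : (0 < y)%N by lia.
have z0 : (0 < z)%N by lia.
apply/eqP; rewrite -(eqr_nat rat) !(natrD, natrM); apply/eqP.
have hp : (p%:R : rat) != 0 by rewrite pnatr_eq0 -lt0n.
have hx : (x%:R : rat) != 0 by rewrite pnatr_eq0 -lt0n.
have hy : (y%:R : rat) != 0 by rewrite pnatr_eq0 -lt0n.
have hz : (z%:R : rat) != 0 by rewrite pnatr_eq0 -lt0n.
move: H; set P := (p%:R : rat); set X := (x%:R : rat); set Y := (y%:R : rat); set Z := (z%:R : rat).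
move=> H.
have : 4 * X * Y * Z = P * (X * Y * Z) * (4 / P) by field.
rewrite H => ->. field. by rewrite hx hy hz.
Qed.

Theorem theorem1 (p x y z : nat) :
  prime p -> (0 < x)%N -> (x <= y)%N -> (y <= z)%N ->
  (4%:R / p%:R : rat) = 1 / x%:R + 1 / y%:R + 1 / z%:R ->
  (4 * (x * y)%:Z - (x + y)%:Z * p%:Z : int)
    = ((gcdn y p) * (gcdn (x * y) (x + y)))%N%:Z.
Proof.
move=> pp x0 xy yz H.
have E := natEq _ _ _ _ pp x0 xy yz H.
have z0 : (0 < z)%N by apply: leq_trans yz; apply: leq_trans xy.
have hle := hleL z0 E.
rewrite -(mainN _ _ _ _ pp x0 xy yz E) -subzn // PoszM -PoszM.
Qed.
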